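(* Let $k\ge2$, $\beta>0$, $J,B\in\mathbb{R}$, $\theta=\tanh(\beta J)$, $f_\theta(h)=\operatorname{arctanh}(\theta\tanh h)$, and let $(h,h')\in\mathbb{R}^2$ satisfy $$h=k f_\theta(h'+\beta B),\qquad h'=k f_\theta(h+\beta B).$$ Consider the periodic boundary condition $h_x=h$ if $d(x,x^0)$ is even and $h_x=h'$ if $d(x,x^0)$ is odd. Let $F_n=-\frac{1}{\beta|V_n|}\ln Z_n(\{h_x\})$ and $$d(t)=\frac{1}{2\beta}\ln\big(4\cosh[t+\beta(B+J)]\cosh[t+\beta(B-J)]\big).$$ Then $$\lim_{m\to\infty}F_{2m}=-\frac{1}{k+1}\big(k\,d(h)+d(h')\big),\qquad \lim_{m\to\infty}F_{2m+1}=-\frac{1}{k+1}\big(d(h)+k\,d(h')\big).$$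
   Context: $\Gamma^k=(V,L)$ is the Cayley tree in which every vertex has $k+1$ neighbours; $x^0\in V$ is a fixed root, $d(\cdot,\cdot)$ the graph distance, $V_n=\{x:d(x,x^0)\le n\}$, $W_n=\{x:d(x,x^0)=n\}$. For a boundary condition $\{h_x\in\mathbb{R}\}_{x\in V}$, $$Z_n(\{h_x\})=\sum_{\sigma\in\{-1,1\}^{V_n}}\exp\Big\{\beta J\sum_{\langle x,y\rangle\subset V_n}\sigma(x)\sigma(y)+\beta B\sum_{x\in V_n}\sigma(x)+\sum_{x\in W_n}h_x\sigma(x)\Big\},$$ the first sum running over nearest-neighbour pairs with both endpoints in $V_n$. *)

(* Defs.v *)
From Stdlib Require Import Reals.
From HB Require Import structures.
From mathcomp Require Import all_boot all_order all_algebra.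
From mathcomp Require Import Rstruct.

Unset Printing Implicit Defensive.
Import GRing.Theory Num.Theory.
Local Open Scope ring_scope.

Definition arctanh (y : R) : R := 2^-1 * ln ((1 + y) / (1 - y)).

Definition f_theta (theta h : R) : R := arctanh (theta * tanh h).

(* Gamma^k is realised as the Cayley graph of the free product of k+1 copies
   of Z/2Z with generators a_0,...,a_k: vertices are reduced words
   (no two consecutive equal letters) over 'I_(k+1); x and y are neighbours
   iff y = x a_i or x = y a_i. *)

Definition reduced (k : nat) (s : seq 'I_k.+1) : bool :=
  if s is a :: t then path (fun x y => x != y) a t else true.

Definition cayley_child (k : nat) (x y : seq 'I_k.+1) : bool :=
  (size y == (size x).+1) && (take (size x) y == x).

Definition cayley_adj (k : nat) (x y : seq 'I_k.+1) : bool :=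
  cayley_child k x y || cayley_child k y x.

Definition root_vertex (k : nat) : seq 'I_k.+1 := [::].

Definition dist_root (k : nat) (x : seq 'I_k.+1) : nat := size x.

Definition ball (k n : nat) : seq (seq 'I_k.+1) :=
  [seq s <- flatten [seq [seq val t | t <- enum {: m.-tuple 'I_k.+1}]
                    | m <- iota 0 n.+1] | reduced k s].

Definition Vn (k n : nat) : finType := seq_sub (ball k n).

Definition spin (b : bool) : R := if b then 1 else -1.

Definition Zn (k : nat) (beta J B : R) (hb : seq 'I_k.+1 -> R) (n : nat) : R :=
  \sum_(sigma : {ffun Vn k n -> bool})
    exp (beta * J * (2^-1 * \sum_(x : Vn k n) \sum_(y : Vn k n
                             | cayley_adj k (val x) (val y))
                             spin (sigma x) * spin (sigma y))
         + beta * B * (\sum_(x : Vn k n) spin (sigma x))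
         + \sum_(x : Vn k n | dist_root k (val x) == n)
              hb (val x) * spin (sigma x)).

Definition periodic_bc (k : nat) (h h' : R) (x : seq 'I_k.+1) : R :=
  if odd (dist_root k x) then h' else h.

Definition free_energy (k : nat) (beta J B : R) (hb : seq 'I_k.+1 -> R)
  (n : nat) : R :=
  - (beta * #|Vn k n|%:R)^-1 * ln (Zn k beta J B hb n).

Definition dfun (beta J B t : R) : R :=
  (2 * beta)^-1 * ln (4 * cosh (t + beta * (B + J)) * cosh (t + beta * (B - J))).

(* Main.v *)
Require Import Defs.
From Stdlib Require Import Reals Lra Lia.
From HB Require Import structures.
From mathcomp Require Import all_boot all_order all_algebra.
From mathcomp Require Import Rstruct zify.

Local Open Scope R_scope.

Lemma lim_ratio (U : nat -> R) (C a D g : R) :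
  0 < g -> 0 < D -> (forall m, INR m <= U m) ->
  Un_cv (fun m => (C + a * U m) * / (D + g * U m)) (a * / g).
Proof.
intros Hg HD HU eps He.
set K := Rabs (C * g - a * D).
assert (HK0 : 0 <= K) by apply Rabs_pos.
destruct (INR_unbounded (K * / (g * g * eps))) as [N HN].
assert (Hgge : 0 < g * g * eps) by (apply Rmult_lt_0_compat; [apply Rmult_lt_0_compat|]; lra).
assert (HK : K < INR N * (g * g * eps)).
{ apply Rmult_lt_compat_r with (r := g * g * eps) in HN; [|exact Hgge].
  replace (K * / (g * g * eps) * (g * g * eps)) with K in HN by (field; lra). lra. }
exists N; intros m Hm; unfold R_dist.
assert (HUm : INR N <= U m) by (apply Rle_trans with (INR m); [apply le_INR; lia | apply HU]).
assert (H0 : 0 <= INR N) by apply pos_INR.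
assert (Hden : 0 < D + g * U m) by nra.
replace ((C + a * U m) * / (D + g * U m) - a * / g)
  with ((C * g - a * D) * / (g * (D + g * U m))) by (field; lra).
rewrite Rabs_mult (Rabs_pos_eq (/ _)); last by left; apply Rinv_0_lt_compat; nra.
fold K.
apply (Rmult_lt_reg_r (g * (D + g * U m))); [nra|].
replace (K * / (g * (D + g * U m)) * (g * (D + g * U m))) with K by (field; nra).
assert (0 <= eps * (g * g) * (U m - INR N)).
{ apply Rmult_le_pos; [|lra]. nra. }
nra.
Qed.

Lemma Un_cv_ev (u v : nat -> R) l :
  (forall m, (1 <= m)%nat -> u m = v m) -> Un_cv v l -> Un_cv u l.
Proof.
intros Huv Hv eps He; destruct (Hv eps He) as [N HN].
exists (S N); intros m Hm; rewrite Huv; [apply HN; lia | lia].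
Qed.

Lemma Un_cv_l (u : nat -> R) l l' : Un_cv u l -> l = l' -> Un_cv u l'.
Proof. by move=> H <-. Qed.

Lemma alg_even (be K kk U A l2 c : R) : 0 < be -> 0 <= U -> 0 <= kk -> K = kk + 1 ->
  - / (be * (1 + K * U * (kk * 1 + 1))) * (K * U * A + l2 + c)
  = (- (l2 + c) * / be + (- (K * A) * / be) * U) * / (1 + K * K * U).
Proof.
move=> Hb HU Hk ->.
have P1 : 0 <= (kk + 1) * U * (kk * 1 + 1) by repeat apply Rmult_le_pos; lra.
have P2 : 0 <= (kk + 1) * (kk + 1) * U by repeat apply Rmult_le_pos; lra.
have H1 : 0 < 1 + (kk + 1) * U * (kk * 1 + 1) by lra.
have H2 : 0 < 1 + (kk + 1) * (kk + 1) * U by lra.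
field; repeat split; lra.
Qed.

Lemma alg_odd (be K kk U A B l2 c : R) : 0 < be -> 0 <= U -> 0 <= kk -> K = kk + 1 ->
  - / (be * (1 + (K * 1 + K * kk * U * (1 + kk * 1)))) * (K * B + K * kk * U * (A + kk * B) + l2 + c)
  = (- (K * B + l2 + c) * / be + (- (K * kk * (A + kk * B)) * / be) * U)
     * / (1 + K + K * kk * K * U).
Proof.
move=> Hb HU Hk ->.
have P1 : 0 <= (kk + 1) * kk * U * (1 + kk * 1) by repeat apply Rmult_le_pos; lra.
have P2 : 0 <= (kk + 1) * kk * (kk + 1) * U by repeat apply Rmult_le_pos; lra.
have H1 : 0 < 1 + ((kk + 1) * 1 + (kk + 1) * kk * U * (1 + kk * 1)) by lra.
have H2 : 0 < 1 + (kk + 1) + (kk + 1) * kk * (kk + 1) * U by lra.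
field; repeat split; lra.
Qed.

Lemma val_even (be K kk a b : R) : 0 < be -> 0 <= kk -> K = kk + 1 ->
  (- (K * (kk * a + b)) * / be) * / (K * K) = - / (kk + 1) * (kk * (a * / be) + b * / be).
Proof. move=> Hb Hk ->; field; lra. Qed.

Lemma val_odd (be K kk a b : R) : 0 < be -> 0 < kk -> K = kk + 1 ->
  (- (K * kk * (a + kk * b)) * / be) * / (K * kk * K) = - / (kk + 1) * (a * / be + kk * (b * / be)).
Proof. move=> Hb Hk ->; field; lra. Qed.

Set Implicit Arguments. Unset Strict Implicit. Unset Printing Implicit Defensive.
Import GRing.Theory Num.Theory.

Local Open Scope ring_scope.
Lemma natr2 : (2%:R : R) = IZR 2.
Proof. rewrite -INRE /=; lra. Qed.
Lemma natr4 : (4%:R : R) = IZR 4.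
Proof. rewrite -INRE /=; lra. Qed.
Local Close Scope ring_scope.

Local Open Scope R_scope.

Lemma cosh_e x : cosh x = (exp x + / exp x) / 2.
Proof. by rewrite /cosh exp_Ropp. Qed.
Lemma sinh_e x : sinh x = (exp x - / exp x) / 2.
Proof. by rewrite /sinh exp_Ropp. Qed.
Lemma cosh_pos x : 0 < cosh x.
Proof. rewrite /cosh; have := exp_pos x; have := exp_pos (- x); lra. Qed.

Lemma one_plus_tt u t :
  1 + tanh u * tanh t = cosh (t + u) / (cosh t * cosh u).
Proof.
rewrite /tanh !cosh_e !sinh_e exp_plus.
have hX := exp_pos t; have hY := exp_pos u.
set X := exp t; set Y := exp u.
have h1 : X * X + 1 <> 0 by nra.
have h2 : Y * Y + 1 <> 0 by nra.
field; repeat split; by [apply: Rgt_not_eq | auto].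
Qed.

Lemma one_minus_tt u t :
  1 - tanh u * tanh t = cosh (t - u) / (cosh t * cosh u).
Proof.
rewrite /tanh !cosh_e !sinh_e /Rminus exp_plus exp_Ropp.
have hX := exp_pos t; have hY := exp_pos u.
set X := exp t; set Y := exp u.
have h1 : X * X + 1 <> 0 by nra.
have h2 : Y * Y + 1 <> 0 by nra.
field; repeat split; by [apply: Rgt_not_eq | auto].
Qed.

Lemma ratio_tt u t :
  (1 + tanh u * tanh t) / (1 - tanh u * tanh t) = cosh (t + u) / cosh (t - u).
Proof.
rewrite one_plus_tt one_minus_tt.
have := cosh_pos t; have := cosh_pos u; have := cosh_pos (t - u); have := cosh_pos (t + u).
move=> *; field; repeat split; by apply: Rgt_not_eq.
Qed.

Lemma ln_ratio u t :
  ln ((1 + tanh u * tanh t) * / (1 - tanh u * tanh t)) = ln (cosh (t+u)) - ln (cosh (t-u)).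
Proof.
have Hr := ratio_tt u t; rewrite /Rdiv in Hr; rewrite Hr.
have cp := cosh_pos (t+u); have cm := cosh_pos (t-u).
rewrite ln_mult; [rewrite ln_Rinv //; lra | lra | apply: Rinv_0_lt_compat; lra].
Qed.

Lemma ln_4cc u t :
  ln (4 * cosh (t + u) * cosh (t - u)) = 2 * ln 2 + ln (cosh (t+u)) + ln (cosh (t-u)).
Proof.
have cp := cosh_pos (t+u); have cm := cosh_pos (t-u).
rewrite ln_mult; [|apply: Rmult_lt_0_compat; lra|lra].
rewrite ln_mult; [|lra|lra].
replace 4 with (2 * 2) by lra; rewrite ln_mult; lra.
Qed.

Local Open Scope ring_scope.

Lemma cosh_split u t (b : bool) :
  2^-1 * (exp (spin true * (u * spin b + t)) + exp (spin false * (u * spin b + t)))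
  = exp (2^-1 * ln (4 * cosh (t + u) * cosh (t - u)) - ln 2 + spin b * f_theta (tanh u) t).
Proof.
rewrite /f_theta /arctanh /spin.
rewrite -?RminusE -?RoppE -?RplusE -?RmultE -?RinvE ?natr2 ?natr4 -?R1E.
rewrite ln_ratio ln_4cc.
Local Close Scope ring_scope.
have cp := cosh_pos (t+u); have cm := cosh_pos (t-u).
set A := ln (cosh (t + u)); set B := ln (cosh (t - u)).
case: b.
  have -> : (/ 2 * (2 * ln 2 + A + B) - ln 2 + 1 * (/ 2 * (A - B)) = A) by field.
  rewrite /A exp_ln // /cosh.
  have -> : (1 * (u * 1 + t) = t + u) by ring.
  have -> : (- (1) * (u * 1 + t) = - (t + u)) by ring.
  exact: Rmult_comm.
have -> : (/ 2 * (2 * ln 2 + A + B) - ln 2 + - (1) * (/ 2 * (A - B)) = B) by field.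
rewrite /B exp_ln // /cosh.
have -> : (1 * (u * - (1) + t) = t - u) by ring.
have -> : (- (1) * (u * - (1) + t) = - (t - u)) by ring.
exact: Rmult_comm.
Qed.

Local Open Scope ring_scope.
Lemma cosh_half t : 2^-1 * (exp (spin true * t) + exp (spin false * t)) = cosh t.
Proof.
rewrite /spin -?RoppE -?RplusE -?RmultE -?RinvE ?natr2 -?R1E /cosh.
Local Close Scope ring_scope.
have -> : (1 * t = t) by ring.
have -> : (- (1) * t = - t) by ring.
exact: Rmult_comm.
Qed.

Local Open Scope ring_scope.

Lemma mem_ball k n s : (s \in ball k n) = reduced k s && (size s <= n)%N.
Proof.
rewrite mem_filter; congr andb.
apply/flattenP/idP => [[t /mapP [m]] | Hs].
  rewrite mem_iota => /andP[_ Hm] -> /mapP [u _ ->].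
  by rewrite size_tuple -ltnS.
exists [seq val t | t <- enum {: (size s).-tuple 'I_k.+1}].
  by apply/mapP; exists (size s) => //; rewrite mem_iota.
by apply/mapP; exists (in_tuple s) => //; rewrite mem_enum.
Qed.

Lemma reduced_take k s i : reduced k s -> reduced k (take i s).
Proof. case: s => [|a t] //; case: i => [|i] //= ; exact: take_path. Qed.

Lemma reduced_rcons k s i :
  reduced k (rcons s i) = reduced k s && ((s == [::]) || (last i s != i)).
Proof. by case: s => [|a t] //=; rewrite rcons_path. Qed.

Lemma nil_in_ball k n : [::] \in ball k n.
Proof. by rewrite mem_ball. Qed.

Definition rootT k n : Vn k n := @SeqSub _ (ball k n) [::] (nil_in_ball k n).

Definition depth k n (x : Vn k n) : nat := size (val x).

Definition par k n (x : Vn k n) : Vn k n :=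
  insubd (rootT k n) (take (depth x).-1 (val x)).

Lemma in_ballT k n (x : Vn k n) : reduced k (val x) && (size (val x) <= n)%N.
Proof. by rewrite -mem_ball; exact: (valP x). Qed.

Lemma depth_le k n (x : Vn k n) : (depth x <= n)%N.
Proof. by case/andP: (in_ballT x). Qed.

Lemma val_par k n (x : Vn k n) : val (par x) = take (depth x).-1 (val x).
Proof.
have H : take (depth x).-1 (val x) \in ball k n.
  rewrite mem_ball reduced_take; last by case/andP: (in_ballT x).
  by rewrite size_take; case: ifP => _; [apply: leq_trans (depth_le x); rewrite /depth; case: (size _) | exact: depth_le].
by rewrite val_insubd H.
Qed.

Lemma depth_par k n (x : Vn k n) : depth (par x) = (depth x).-1.
Proof.
rewrite /depth val_par size_take -/(depth x).
by case: (depth x) => [|d] //=; rewrite ltnSn.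
Qed.

Lemma depth0 k n (x : Vn k n) : (depth x == 0%N) = (x == rootT k n).
Proof.
apply/idP/eqP => [|->] //; rewrite /depth size_eq0 => /eqP H.
by apply: val_inj; rewrite H.
Qed.

Lemma child_par k n (x y : Vn k n) :
  cayley_child k (val x) (val y) = (0 < depth y)%N && (x == par y).
Proof.
rewrite /cayley_child; apply/andP/andP => [[/eqP Hs /eqP Ht]|[Hd /eqP ->]].
  split; first by rewrite /depth Hs.
  by apply/eqP/val_inj; rewrite val_par /depth Hs /= Ht.
rewrite val_par size_take /depth; move: Hd; rewrite /depth.
by case: (size (val y)) => [|d] //= _; rewrite ltnSn !eqxx.
Qed.

Definition childT k n (x : Vn k n) (i : 'I_k.+1) : Vn k n :=
  insubd (rootT k n) (rcons (val x) i).

Definition okc k n (x : Vn k n) (i : 'I_k.+1) : bool :=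
  (val x == [::]) || (last i (val x) != i).

Lemma val_childT k n (x : Vn k n) i :
  (depth x < n)%N -> okc x i -> val (childT x i) = rcons (val x) i.
Proof.
move=> Hd Hi; have Hd' : ((size (val x)).+1 <= n)%N := Hd.
rewrite val_insubd mem_ball reduced_rcons size_rcons.
have Hi' : (val x == [::]) || (last i (val x) != i) := Hi.
by case/andP: (in_ballT x) => -> _; rewrite Hd' Hi'.
Qed.

Lemma rcons_take_last (T : eqType) (s : seq T) d :
  s != [::] -> rcons (take (size s).-1 s) (last d s) = s.
Proof.
case/lastP: s => [|s a] //= _; rewrite size_rcons /= last_rcons; congr rcons.
by rewrite -cats1 take_size_cat.
Qed.

Lemma val_child_last k n (x y : Vn k n) :
  depth y = (depth x).+1 -> par y = x ->
  val y = rcons (val x) (last ord0 (val y)).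
Proof.
move=> Hy Hp.
have Hne : val y != [::] by rewrite -size_eq0 -/(depth y) Hy.
by rewrite -Hp val_par rcons_take_last.
Qed.

Lemma card_children k n (x : Vn k n) : (depth x < n)%N ->
  #|[pred y : Vn k n | (depth y == (depth x).+1) && (par y == x)]|
    = if depth x == 0%N then k.+1 else k.
Proof.
move=> Hd.
have -> : #|[pred y : Vn k n | (depth y == (depth x).+1) && (par y == x)]|
          = #|[pred i : 'I_k.+1 | okc x i]|.
  rewrite -(@card_in_imset _ _ (childT x) [pred i | okc x i]).
    apply: eq_card => y; rewrite inE; apply/andP/imsetP.
      case=> /eqP Hy /eqP Hp.
      have Hv := val_child_last Hy Hp.
      have Hok : okc x (last ord0 (val y)).
        have H0 := in_ballT y; rewrite Hv reduced_rcons in H0.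
        by case/andP: H0 => /andP[_ H] _.
      exists (last ord0 (val y)); first by rewrite inE.
      by apply: val_inj; rewrite val_childT.
    case=> i; rewrite inE => Hi ->.
    have Hv := val_childT Hd Hi.
    split; first by rewrite /depth Hv size_rcons.
    apply/eqP/val_inj; rewrite val_par /depth Hv size_rcons /=.
    by rewrite -cats1 take_size_cat.
  move=> i j; rewrite !inE => Hi Hj /(congr1 val).
  by rewrite !val_childT // => /(congr1 (last ord0)); rewrite !last_rcons.
rewrite /depth; case E: (val x) => [|a t] /=.
  by rewrite -[RHS](card_ord k.+1); apply: eq_card => i; rewrite inE /okc E.
have -> : #|[pred i : 'I_k.+1 | okc x i]| = #|predC1 (last a t)|.
  by apply: eq_card => i; rewrite inE /okc E /= eq_sym.
by rewrite cardC1 card_ord.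
Qed.

Lemma sum_par k n j (F : Vn k n -> R) : (j < n)%N ->
  \sum_(y | depth y == j.+1) F (par y)
    = (if j == 0%N then k.+1 else k)%:R * \sum_(x | depth x == j) F x.
Proof.
move=> Hj.
rewrite (partition_big (@par k n) (fun x => depth x == j)); last first.
  by move=> y /eqP Hy; rewrite depth_par Hy.
rewrite mulr_sumr; apply: eq_bigr => x /eqP Hx.
rewrite (eq_bigr (fun _ => F x)); last by move=> y /andP[_ /eqP ->].
rewrite sumr_const mulr_natl; congr (_ *+ _).
rewrite -Hx -(card_children (x := x)); last by rewrite Hx.
by apply: eq_card => y; rewrite !inE.
Qed.

Lemma sum_child k n (phi : Vn k n -> Vn k n -> R) :
  \sum_x \sum_(y | cayley_child k (val x) (val y)) phi x y
  = \sum_(y | (0 < depth y)%N) phi (par y) y.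
Proof.
rewrite (eq_bigr (fun x => \sum_y (if cayley_child k (val x) (val y) then phi x y else 0))); last first.
  by move=> x _; rewrite big_mkcond.
rewrite exchange_big /= [RHS]big_mkcond; apply: eq_bigr => y _.
rewrite -big_mkcond /=.
rewrite (eq_bigl (fun x => (0 < depth y)%N && (x == par y))); last by move=> x; rewrite child_par.
case: (0 < depth y)%N; last by rewrite big_pred0.
by rewrite (big_pred1 (par y)).
Qed.

Lemma sum_child2 k n (phi : Vn k n -> Vn k n -> R) :
  \sum_x \sum_(y | cayley_child k (val y) (val x)) phi x y
  = \sum_(x | (0 < depth x)%N) phi x (par x).
Proof.
rewrite [RHS]big_mkcond; apply: eq_bigr => x _.
rewrite (eq_bigl (fun y => (0 < depth x)%N && (y == par x))); last by move=> y; rewrite child_par.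
case: (0 < depth x)%N; last by rewrite big_pred0.
by rewrite (big_pred1 (par x)).
Qed.

Lemma child_excl k a b : cayley_child k a b -> cayley_child k b a = false.
Proof.
rewrite /cayley_child => /andP[/eqP H _]; apply/negbTE; rewrite negb_and H.
by rewrite ltn_eqF // ltnS leqnSn.
Qed.

Lemma edge_sum k n (s : {ffun Vn k n -> bool}) :
  2^-1 * (\sum_(x : Vn k n) \sum_(y : Vn k n | cayley_adj k (val x) (val y))
            spin (s x) * spin (s y))
  = \sum_(y | (0 < depth y)%N) spin (s y) * spin (s (par y)).
Proof.
rewrite (eq_bigr (fun x =>
   \sum_(y | cayley_child k (val x) (val y)) spin (s x) * spin (s y) +
   \sum_(y | cayley_child k (val y) (val x)) spin (s x) * spin (s y))); last first.
  move=> x _; rewrite (bigID (fun y => cayley_child k (val x) (val y))) /=.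
  congr (_ + _); apply: eq_bigl => y; rewrite /cayley_adj.
    by case: (cayley_child k (ssval x) (ssval y)); rewrite ?andbF.
  case E: (cayley_child k (ssval x) (ssval y)) => /=; last by rewrite andbT.
  by rewrite child_excl.
rewrite big_split /= sum_child sum_child2.
rewrite (eq_bigr (fun y => spin (s y) * spin (s (par y)))); last by move=> y _; rewrite mulrC.
by rewrite -mulr2n -[X in _ * X]mulr_natl mulKf // pnatr_eq0.
Qed.

Definition flip (T : finType) (w : T) (s : {ffun T -> bool}) : {ffun T -> bool} :=
  [ffun x => if x == w then ~~ s x else s x].

Lemma flipK (T : finType) (w : T) : involutive (flip w).
Proof. by move=> s; apply/ffunP => x; rewrite !ffunE; case: eqP => // _; rewrite negbK. Qed.

Lemma flip_ne (T : finType) (w x : T) s : x != w -> flip w s x = s x.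
Proof. by rewrite ffunE => /negbTE ->. Qed.

Lemma flip_eq (T : finType) (w : T) s : flip w s w = ~~ s w.
Proof. by rewrite ffunE eqxx. Qed.

Lemma flip_one (T : finType) (w : T) (H K : {ffun T -> bool} -> R) :
  (forall s, H (flip w s) = H s) ->
  \sum_s H s * K s = \sum_s H s * (2^-1 * (K s + K (flip w s))).
Proof.
move=> HH.
have E : \sum_s H s * K s = \sum_s H s * K (flip w s).
  rewrite (reindex_inj (inv_inj (flipK w))) /=.
  by apply: eq_bigr => s _; rewrite HH.
rewrite [RHS](eq_bigr (fun s => 2^-1 * (H s * K s + H s * K (flip w s)))); last first.
  by move=> s _; rewrite mulrCA mulrDr.
rewrite -mulr_sumr big_split /= -E.
by rewrite -mulr2n -[X in _ * X]mulr_natl mulKf // pnatr_eq0.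
Qed.

Lemma flip_many (T : finType) (W : seq T) (p : T -> T) (G : T -> bool -> bool -> R)
  (F : {ffun T -> bool} -> R) :
  uniq W -> (forall y, y \in W -> p y \notin W) ->
  (forall y s, y \in W -> F (flip y s) = F s) ->
  \sum_s F s * \prod_(y <- W) G y (s y) (s (p y)) =
  \sum_s F s * \prod_(y <- W) (2^-1 * (G y true (s (p y)) + G y false (s (p y)))).
Proof.
elim: W F => [|w W IH] F UW Hp HF; first by apply: eq_bigr => s _; rewrite !big_nil.
case/andP: UW => wW UW.
set M := fun s : {ffun T -> bool} => 2^-1 * (G w true (s (p w)) + G w false (s (p w))).
have pw : p w \notin w :: W := Hp w (mem_head _ _).
have pwne : p w != w by apply: contra pw => /eqP ->; exact: mem_head.
have HpW : forall y, y \in W -> p y \notin W.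
  move=> y yW; have := Hp y; rewrite inE yW orbT => /(_ isT).
  by rewrite inE negb_or => /andP[_].
transitivity (\sum_s (F s * M s) * \prod_(y <- W) G y (s y) (s (p y))).
  rewrite (eq_bigr (fun s => (F s * \prod_(y <- W) G y (s y) (s (p y))) * G w (s w) (s (p w)))); last first.
    by move=> s _; rewrite big_cons mulrCA mulrC.
  rewrite (@flip_one T w (fun s => F s * \prod_(y <- W) G y (s y) (s (p y))) (fun s => G w (s w) (s (p w)))); last first.
    move=> s; rewrite HF ?mem_head //; congr (_ * _).
    apply: eq_big_seq => y yW.
    have ynw : y != w by apply: contra wW => /eqP <-.
    have pynw : p y != w.
      have := Hp y; rewrite inE yW orbT => /(_ isT).
      by rewrite inE negb_or => /andP[].
    by rewrite !flip_ne.
  apply: eq_bigr => s _.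
  rewrite flip_eq flip_ne // /M; case: (s w) => /=; last by rewrite [G w false _ + _]addrC mulrAC.
  by rewrite mulrAC.
rewrite IH //; last first.
  move=> y s yW; rewrite HF ?inE ?yW ?orbT //; congr (_ * _); rewrite /M flip_ne //.
  by apply: contra pw => /eqP ->; rewrite inE yW orbT.
by apply: eq_bigr => s _; rewrite big_cons -mulrA.
Qed.

From mathcomp Require Import ring.
Local Open Scope ring_scope.
Ltac mring := rewrite ?RplusE ?RmultE ?RminusE ?RoppE ?R0E ?R1E; ring.

Definition En k n (bJ bB g : R) (j : nat) (s : {ffun Vn k n -> bool}) : R :=
  bJ * (\sum_(y | (0 < depth y)%N && (depth y <= j)%N) spin (s y) * spin (s (par y)))
  + bB * (\sum_(y | (depth y <= j)%N) spin (s y))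
  + g * (\sum_(y | depth y == j) spin (s y)).

Lemma Zn_En k n beta J B h h' :
  Zn k beta J B (periodic_bc k h h') n
  = \sum_(s : {ffun Vn k n -> bool}) exp (En (beta * J) (beta * B) (if odd n then h' else h) n s).
Proof.
rewrite /Zn; apply: eq_bigr => s _; congr exp.
transitivity (beta * J * (2^-1 * (\sum_x \sum_(y | cayley_adj k (val x) (val y))
   spin (s x) * spin (s y))) + beta * B * (\sum_x spin (s x))
   + \sum_(x | dist_root k (val x) == n) periodic_bc k h h' (val x) * spin (s x)); first by [].
rewrite edge_sum; congr (_ + _ + _).
- congr (_ * _); apply: eq_bigl => y; by rewrite depth_le andbT.
- congr (_ * _); apply: eq_bigl => y; by rewrite depth_le.
  transitivity (\sum_(y | depth y == n) (if odd n then h' else h) * spin (s y)).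
    apply: eq_bigr => y /eqP Hy; by rewrite /periodic_bc Hy.
  by rewrite [RHS]RmultE mulr_sumr.
Qed.

Lemma split_le1 k n j (F : Vn k n -> R) :
  \sum_(y | (0 < depth y)%N && (depth y <= j.+1)%N) F y
  = \sum_(y | (0 < depth y)%N && (depth y <= j)%N) F y + \sum_(y | depth y == j.+1) F y.
Proof.
rewrite (bigID (fun y => (depth y <= j)%N)) /=; congr (_ + _); apply: eq_bigl => y;
  case: (depth y) => [|d] /=; lia.
Qed.

Lemma split_le2 k n j (F : Vn k n -> R) :
  \sum_(y | (depth y <= j.+1)%N) F y
  = \sum_(y | (depth y <= j)%N) F y + \sum_(y | depth y == j.+1) F y.
Proof.
rewrite (bigID (fun y => (depth y <= j)%N)) /=; congr (_ + _); apply: eq_bigl => y; lia.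
Qed.

Lemma En_succ k n bJ bB g j (s : {ffun Vn k n -> bool}) :
  En bJ bB g j.+1 s = En bJ bB 0 j s +
    \sum_(y | depth y == j.+1) spin (s y) * (bJ * spin (s (par y)) + bB + g).
Proof.
rewrite /En split_le1 split_le2.
rewrite [X in _ = _ + X](eq_bigr (fun y => bJ * (spin (s y) * spin (s (par y))) + bB * spin (s y) + g * spin (s y))); last first.
  by move=> y _; mring.
rewrite !big_split /= -!mulr_sumr; mring.
Qed.

Lemma exp_sum (I : Type) (r : seq I) (P : pred I) (F : I -> R) :
  exp (\sum_(i <- r | P i) F i) = \prod_(i <- r | P i) exp (F i).
Proof.
by apply: (@big_morph R R exp 1 *%R 0 +%R) => [x y|]; [exact: exp_plus | exact: exp_0].
Qed.

Definition Pf k n bJ bB g j : R := \sum_(s : {ffun Vn k n -> bool}) exp (En bJ bB g j s).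
Definition lvl k n j := #|[pred y : Vn k n | depth y == j]|.
Definition Lt (bJ t : R) : R := 2^-1 * ln (4 * cosh (t + bJ) * cosh (t - bJ)).
Definition Gf k n (a t : R) (y : Vn k n) (b c : bool) : R := exp (spin b * (a * spin c + t)).
Definition Ff k n bJ bB j (s : {ffun Vn k n -> bool}) : R := exp (En bJ bB 0 j s).

Lemma peel k n bJ bB g j : (j < n)%N ->
  Pf k n bJ bB g j.+1 = exp ((lvl k n j.+1)%:R * (Lt bJ (bB + g) - ln 2)) *
     Pf k n bJ bB ((if j == 0%N then k.+1 else k)%:R * f_theta (tanh bJ) (bB + g)) j.
Proof.
move=> Hj; rewrite /Pf.
set W := [seq y <- index_enum (Vn k n) | depth y == j.+1].
have E1 : forall s, exp (En bJ bB g j.+1 s) =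
    Ff bJ bB j s * \prod_(y <- W) Gf bJ (bB + g) y (s y) (s (par y)).
  move=> s; rewrite En_succ exp_plus exp_sum /W big_filter /Ff; congr (_ * _).
  by apply: eq_bigr => y _; rewrite /Gf; congr (exp (_ * _)); mring.
rewrite (eq_bigr _ (fun s _ => E1 s)).
rewrite flip_many; first last.
- move=> y s; rewrite mem_filter => /andP[/eqP Hy _].
  rewrite /Ff /En; congr (exp (_ * _ + _ * _ + _ * _)).

  { apply: eq_bigr => z /andP[Hz1 Hz2]; rewrite !flip_ne //.
    all: apply/eqP => E; first [have := depth_par z; rewrite E Hy => H; lia | move: Hz2; rewrite E Hy; lia]. }
  { apply eq_bigr; move=> z Hz; rewrite flip_ne //.
    by apply/eqP => E; move: Hz; rewrite E Hy; lia. }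
  { apply eq_bigr; move=> z /eqP Hz; rewrite flip_ne //.
    by apply/eqP => E; move: Hz; rewrite E Hy; lia. }
- move=> y; rewrite !mem_filter => /andP[/eqP Hy _]; rewrite depth_par Hy /=.
  by rewrite (ltn_eqF (ltnSn j)).
- exact: filter_uniq (index_enum_uniq _).
rewrite mulr_sumr; apply: eq_bigr => s _.
rewrite (_ : \prod_(y <- W) _ = exp (\sum_(y | depth y == j.+1)
     (Lt bJ (bB + g) - ln 2 + spin (s (par y)) * f_theta (tanh bJ) (bB + g)))); last first.
  rewrite exp_sum /W big_filter; apply: eq_bigr => y _; by rewrite /Gf cosh_split.
rewrite /Ff !expRD; congr exp.
rewrite big_split /= sumr_const -mulr_suml (sum_par (fun x => spin (s x)) Hj).
rewrite /En /lvl -mulr_natl; mring.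
Qed.

Lemma Pf0 k n bJ bB g : Pf k n bJ bB g 0 = (2%:R ^+ #|Vn k n|) * cosh (bB + g).
Proof.
rewrite /Pf.
have E : forall s : {ffun Vn k n -> bool},
    En bJ bB g 0 s = spin (s (rootT k n)) * (bB + g).
  move=> s; rewrite /En big_pred0; last by move=> y /=; case: (depth y).
  rewrite (big_pred1 (rootT k n)); last by move=> y; rewrite /= leqn0 depth0.
  rewrite (big_pred1 (rootT k n)); last by move=> y; rewrite /= depth0.
  mring.
rewrite (eq_bigr (fun s : {ffun Vn k n -> bool} => 1 * exp (spin (s (rootT k n)) * (bB + g)))); last first.
  by move=> s _; rewrite E mul1r.
rewrite (@flip_one _ (rootT k n) (fun _ => 1) (fun s : {ffun Vn k n -> bool} => exp (spin (s (rootT k n)) * (bB + g)))) //.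
rewrite (eq_bigr (fun _ => cosh (bB + g))); last first.
  move=> s _; rewrite mul1r flip_eq; case: (s (rootT k n)) => /=.
    exact: cosh_half.
  by rewrite addrC cosh_half.
by rewrite sumr_const card_ffun card_bool -natrX mulr_natl.
Qed.

Lemma lvl0 k n : lvl k n 0 = 1%N.
Proof.
rewrite /lvl -(card1 (rootT k n)); apply: eq_card => y; by rewrite !inE depth0.
Qed.

Lemma lvlS k n j : (j < n)%N ->
  (lvl k n j.+1)%:R = (if j == 0%N then k.+1 else k)%:R * (lvl k n j)%:R :> R.
Proof.
move=> Hj; move: (sum_par (fun _ : Vn k n => (1 : R)) Hj); rewrite !sumr_const /lvl.
by [].
Qed.

Lemma lvlf k n j : (j < n)%N -> (lvl k n j.+1)%:R = (k.+1)%:R * k%:R ^+ j :> R.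
Proof.
elim: j => [|j IH] Hj.
  by rewrite lvlS // lvl0 /= expr0 mulr1.
rewrite lvlS // IH; last by lia.
by rewrite /= exprS; mring.
Qed.

Fixpoint Ssum (k : nat) (a b : R) (j : nat) {struct j} : R :=
  match j with
  | 0 => 0
  | j'.+1 => Ssum k a b j' + (k.+1)%:R * k%:R ^+ j' * (if odd j'.+1 then b else a)
  end.

Lemma cnt_le k n j : (j <= n)%N ->
  \sum_(y : Vn k n | (depth y <= j)%N) (1 : R) = 1 + Ssum k 1 1 j.
Proof.
elim: j => [|j IH] Hj.
  rewrite (big_pred1 (rootT k n)) /=; last by move=> y; rewrite /= leqn0 depth0.
  mring.
rewrite split_le2 IH; last by lia.
have := lvlf k Hj; rewrite /lvl -sumr_const => ->.
rewrite /= if_same; mring.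
Qed.

Lemma card_V k n : (#|Vn k n|)%:R = 1 + Ssum k 1 1 n :> R.
Proof.
rewrite -(cnt_le k (leqnn n)) (eq_bigl xpredT); last by move=> y; rewrite depth_le.
by rewrite sumr_const.
Qed.

Lemma Ssum_sub k a b c j :
  Ssum k (a - c) (b - c) j = Ssum k a b j - c * Ssum k 1 1 j.
Proof.
elim: j => [|j IH] /=; first by mring.
by rewrite IH; case: (odd j) => /=; mring.
Qed.

Lemma chain k n bJ bB h h' :
  h = k%:R * f_theta (tanh bJ) (h' + bB) ->
  h' = k%:R * f_theta (tanh bJ) (h + bB) ->
  forall j, (0 < j <= n)%N ->
  Pf k n bJ bB (if odd j then h' else h) j =
  exp (Ssum k (Lt bJ (bB + h) - ln 2) (Lt bJ (bB + h') - ln 2) j) *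
  Pf k n bJ bB ((k.+1)%:R * f_theta (tanh bJ) (bB + h')) 0.
Proof.
move=> Hh Hh'; elim=> [|j IH] // /andP[_ Hj].
case: j IH Hj => [|j] IH Hj.
  rewrite peel; last by lia.
  rewrite lvlf; last by lia.
  congr (exp _ * _); rewrite /= expr0; mring.
rewrite peel; last by lia.
have Ej : Pf k n bJ bB ((if (j.+1 == 0)%N then k.+1 else k)%:R
            * f_theta (tanh bJ) (bB + (if odd j.+2 then h' else h))) j.+1
          = Pf k n bJ bB (if odd j.+1 then h' else h) j.+1.
  congr Pf; rewrite /=; case: (odd j) => /=.
    by rewrite [in RHS]Hh (Rplus_comm h' bB).
  by rewrite [in RHS]Hh' (Rplus_comm h bB).
rewrite Ej IH; last by lia.
rewrite mulrA expRD; congr (exp _ * _).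
rewrite lvlf; last by lia.
by rewrite /=; case: (odd j) => /=; mring.
Qed.

Lemma lnZ k n beta J B h h' : (0 < n)%N ->
  h = k%:R * f_theta (tanh (beta * J)) (h' + beta * B) ->
  h' = k%:R * f_theta (tanh (beta * J)) (h + beta * B) ->
  ln (Zn k beta J B (periodic_bc k h h') n) =
  Ssum k (Lt (beta * J) (beta * B + h)) (Lt (beta * J) (beta * B + h')) n + ln 2
  + ln (cosh (beta * B + (k.+1)%:R * f_theta (tanh (beta * J)) (beta * B + h'))).
Proof.
move=> Hn Hh Hh'.
rewrite Zn_En -/(Pf k n (beta * J) (beta * B) _ n).
rewrite (chain Hh Hh'); last by rewrite Hn leqnn.
rewrite Pf0 natr2 -RpowE.
set c := cosh _.
have cpos : Rlt 0 c := cosh_pos _.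
have p2 : Rlt 0 (pow 2 #|Vn k n|) by apply: pow_lt; apply: Rlt_0_2.
rewrite ln_mult; [|exact: exp_pos|exact: Rmult_lt_0_compat].
rewrite ln_mult // ln_exp ln_pow; last exact: Rlt_0_2.
rewrite INRE card_V Ssum_sub; mring.
Qed.

Fixpoint U (k : nat) (m : nat) : R :=
  match m with 0 => 0 | m'.+1 => U k m' + k%:R ^+ (m'.*2) end.

Lemma SsumS k a b j :
  Ssum k a b j.+1 = Ssum k a b j + (k.+1)%:R * k%:R ^+ j * (if odd j.+1 then b else a).
Proof. by []. Qed.

Lemma Ssum_even k a b m : Ssum k a b (m.*2) = (k.+1)%:R * U k m * (k%:R * a + b).
Proof.
elim: m => [|m IH]; first by rewrite /=; mring.
rewrite doubleS !SsumS IH /= odd_double /= exprS; mring.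
Qed.

Lemma Ssum_odd k a b m :
  Ssum k a b (m.*2).+1 = (k.+1)%:R * b + (k.+1)%:R * k%:R * U k m * (a + k%:R * b).
Proof.
elim: m => [|m IH].
  rewrite /= expr0; mring.
rewrite doubleS !SsumS -SsumS IH /= odd_double /= !exprS; mring.
Qed.

Lemma U_ge k m : (1 <= k)%N -> Rle (INR m) (U k m).
Proof.
move=> Hk; elim: m => [|m IH]; first by right.
rewrite S_INR [U k m.+1]/=.
have H1 : Rle 1 (k%:R ^+ (m.*2)).
  by apply/RleP; apply: exprn_ege1; rewrite ler1n.
lra.
Qed.

Lemma dfun_Lt beta J B h : Rlt 0 beta ->
  dfun beta J B h = Lt (beta * J) (beta * B + h) * Rinv beta.
Proof.
move=> Hb; rewrite /dfun /Lt.
rewrite (_ : Rplus h (Rmult beta (Rplus B J)) = Rplus (Rplus (Rmult beta B) h) (Rmult beta J)); last by mring.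
rewrite (_ : Rplus h (Rmult beta (Rminus B J)) = Rminus (Rplus (Rmult beta B) h) (Rmult beta J)); last by mring.
set L := ln _.
have Hb0 : beta != 0 by apply/eqP => E; move: Hb; rewrite E; exact: Rlt_irrefl.
rewrite ?RplusE ?RmultE ?RminusE ?RoppE ?RinvE; field.
exact: Hb0.
Qed.

Theorem proposition3 (k : nat) (beta J B h h' : R) :
  (2 <= k)%N -> 0 < beta ->
  h = k%:R * f_theta (tanh (beta * J)) (h' + beta * B) ->
  h' = k%:R * f_theta (tanh (beta * J)) (h + beta * B) ->
  Un_cv (fun m => free_energy k beta J B (periodic_bc k h h') (2 * m)%N)
        (- (k%:R + 1)^-1 * (k%:R * dfun beta J B h + dfun beta J B h')) /\
  Un_cv (fun m => free_energy k beta J B (periodic_bc k h h') (2 * m)%N.+1)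
        (- (k%:R + 1)^-1 * (dfun beta J B h + k%:R * dfun beta J B h')).
Proof.
move=> Hk Hb Hh Hh'.
have Hb' : Rlt 0 beta by apply/RltP.
have Hk1 : (1 <= k)%N by lia.
have kpos : Rle 0 (k%:R) by apply/RleP; exact: ler0n.
have kpos' : Rlt 0 (k%:R) by apply/RltP; rewrite ltr0n; lia.
have Kpos : Rlt 0 ((k.+1)%:R) by apply/RltP; rewrite ltr0n.
have Upos : forall m, Rle 0 (U k m).
  by move=> m; apply: Rle_trans (U_ge m Hk1); apply: pos_INR.
have HK : (k.+1)%:R = Rplus (k%:R) 1 := esym (natr1 (R := R) k).
rewrite (dfun_Lt _ _ _ Hb') (dfun_Lt _ _ _ Hb').
split.
  apply: (@Un_cv_ev _ (fun m => (- (ln 2 + ln (cosh (beta * B + (k.+1)%:R * f_theta (tanh (beta * J)) (beta * B + h')))) * Rinv beta + (- ((k.+1)%:R * (k%:R * Lt (beta * J) (beta * B + h) + Lt (beta * J) (beta * B + h'))) * Rinv beta) * U k m) * Rinv (1 + ((k.+1)%:R * (k.+1)%:R) * U k m))).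
    move=> m Hm; rewrite /free_energy lnZ //; last by lia.
    rewrite card_V mul2n !Ssum_even.
    exact (alg_even beta ((k.+1)%:R) (k%:R) (U k m) (k%:R * Lt (beta * J) (beta * B + h) + Lt (beta * J) (beta * B + h')) (ln 2) (ln (cosh (beta * B + (k.+1)%:R * f_theta (tanh (beta * J)) (beta * B + h')))) Hb' (Upos m) kpos HK).
  eapply Un_cv_l; first apply: (lim_ratio (U k) (- (ln 2 + ln (cosh (beta * B + (k.+1)%:R * f_theta (tanh (beta * J)) (beta * B + h')))) * Rinv beta) (- ((k.+1)%:R * (k%:R * Lt (beta * J) (beta * B + h) + Lt (beta * J) (beta * B + h'))) * Rinv beta) 1 ((k.+1)%:R * (k.+1)%:R) _ Rlt_0_1 (fun m => U_ge m Hk1)).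
    exact: Rmult_lt_0_compat.
  exact (val_even beta ((k.+1)%:R) (k%:R) (Lt (beta * J) (beta * B + h)) (Lt (beta * J) (beta * B + h')) Hb' kpos HK).
apply: (@Un_cv_ev _ (fun m => (- ((k.+1)%:R * Lt (beta * J) (beta * B + h') + ln 2 + ln (cosh (beta * B + (k.+1)%:R * f_theta (tanh (beta * J)) (beta * B + h')))) * Rinv beta + (- ((k.+1)%:R * k%:R * (Lt (beta * J) (beta * B + h) + k%:R * Lt (beta * J) (beta * B + h'))) * Rinv beta) * U k m) * Rinv ((1 + (k.+1)%:R) + ((k.+1)%:R * k%:R * (k.+1)%:R) * U k m))).
  move=> m Hm; rewrite /free_energy lnZ //.
  rewrite card_V mul2n !Ssum_odd.
  exact (alg_odd beta ((k.+1)%:R) (k%:R) (U k m) (Lt (beta * J) (beta * B + h)) (Lt (beta * J) (beta * B + h')) (ln 2) (ln (cosh (beta * B + (k.+1)%:R * f_theta (tanh (beta * J)) (beta * B + h')))) Hb' (Upos m) kpos HK).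
eapply Un_cv_l; first apply: (lim_ratio (U k) (- ((k.+1)%:R * Lt (beta * J) (beta * B + h') + ln 2 + ln (cosh (beta * B + (k.+1)%:R * f_theta (tanh (beta * J)) (beta * B + h')))) * Rinv beta) (- ((k.+1)%:R * k%:R * (Lt (beta * J) (beta * B + h) + k%:R * Lt (beta * J) (beta * B + h'))) * Rinv beta) (1 + (k.+1)%:R) ((k.+1)%:R * k%:R * (k.+1)%:R) _ _ (fun m => U_ge m Hk1)).
  by apply: Rmult_lt_0_compat => //; apply: Rmult_lt_0_compat.
  by apply: Rplus_lt_0_compat => //; exact: Rlt_0_1.
exact (val_odd beta ((k.+1)%:R) (k%:R) (Lt (beta * J) (beta * B + h)) (Lt (beta * J) (beta * B + h')) Hb' kpos' HK).
Qed.
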